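(* Let $H$ be an $r$-graph. Then $\Delta(i(P_{K_r^r,H}))\cong\mathrm{sd}\,\mathsf{B}_{\mathrm{edge}}(H)$ if and only if $H$ does not contain the complete $r$-partite sub-$r$-graph $K^r_{1,\dots,1,2,2}$, i.e. if and only if there do not exist pairwise disjoint sets $A_1,\dots,A_r\subseteq V(H)$ with $|A_1|=\dots=|A_{r-2}|=1$, $|A_{r-1}|=|A_r|=2$ such that $x_1\cdots x_r\in E(H)$ for every choice $x_j\in A_j$.
   Context: An $r$-graph $H$ consists of a vertex set $V(H)$ and a set $E(H)$ of $r$-element subsets of $V(H)$; an edge $\{v_1,\dots,v_r\}$ is written $v_1\cdots v_r$. $K_r^r$ is the $r$-graph on $\{1,\dots,r\}$ with the single edge $\{1,\dots,r\}$. $P_{K_r^r,H}$ is the poset of maps $f:\{1,\dots,r\}\to 2^{V(H)}\setminus\{\varnothing\}$ such that for every choice $x_j\in f(j)$ the $x_j$ are distinct and $x_1\cdots x_r\in E(H)$, ordered by $f\le g$ iff $f(j)\subseteq g(j)$ for all $j$. $\mathsf{B}_{\mathrm{edge}}(H)$ is the simplicial complex whose vertices are tuples $(v_1,\dots,v_r)\in V(H)^r$ with $v_1\cdots v_r\in E(H)$ and whose simplices are the sets $F$ of such tuples with $\mathrm{pr}_1(F),\dots,\mathrm{pr}_r(F)$ pairwise disjoint and $x_1\cdots x_r\in E(H)$ for every choice $x_j\in\mathrm{pr}_j(F)$. $\mathcal F(\mathsf{B}_{\mathrm{edge}}(H))$ denotes its poset of nonempty simplices ordered by inclusion, and $\mathrm{sd}\,\mathsf{B}_{\mathrm{edge}}(H)=\Delta(\mathcal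 F(\mathsf{B}_{\mathrm{edge}}(H)))$, where $\Delta(P)$ is the order complex (simplices = chains) of a poset $P$. The map $i:P_{K_r^r,H}\to\mathcal F(\mathsf{B}_{\mathrm{edge}}(H))$ is $i(\varphi)=\varphi(1)\times\cdots\times\varphi(r)$, and $i(P_{K_r^r,H})$ is its image, a subposet of $\mathcal F(\mathsf{B}_{\mathrm{edge}}(H))$. *)

(* Defs.v *)
From mathcomp Require Import all_boot.
Set Implicit Arguments. Unset Strict Implicit. Unset Printing Implicit Defensive.

Definition is_rgraph (V : finType) (r : nat) (E : {set {set V}}) : Prop :=
  forall e, e \in E -> #|e| = r.

(* tuples (v_1,...,v_r), indexed by 'I_r (0-based) *)
Notation tup V r := {ffun 'I_r -> V}.

Definition is_edge (V : finType) (r : nat) (E : {set {set V}}) (x : tup V r) : bool :=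
  [set x j | j in 'I_r] \in E.

Definition all_choices_edges (V : finType) (r : nat) (E : {set {set V}})
  (A : 'I_r -> {set V}) : bool :=
  [forall x : tup V r, [forall j, x j \in A j] ==> is_edge E x].

(* P_{K_r^r,H} : maps 'I_r -> nonempty subsets such that every choice
   consists of distinct vertices forming an edge *)
Definition in_P (V : finType) (r : nat) (E : {set {set V}})
  (f : {ffun 'I_r -> {set V}}) : bool :=
  [forall j, f j != set0] &&
  [forall x : tup V r, [forall j, x j \in f j] ==> injectiveb x && is_edge E x].

Definition iprod (V : finType) (r : nat) (f : {ffun 'I_r -> {set V}}) : {set tup V r} :=
  [set t : tup V r | [forall j, t j \in f j]].

Definition iP (V : finType) (r : nat) (E : {set {set V}}) : {set {set tup V r}} :=
  [set iprod f | f in [pred f | in_P E f]].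

Definition proj (V : finType) (r : nat) (j : 'I_r) (F : {set tup V r}) : {set V} :=
  [set (t : tup V r) j | t in F].

Definition Bvert (V : finType) (r : nat) (E : {set {set V}}) : {set tup V r} :=
  [set t : tup V r | is_edge E t].

(* nonempty simplices of B_edge(H), i.e. the face poset F(B_edge(H)) *)
Definition Bfaces (V : finType) (r : nat) (E : {set {set V}}) : {set {set tup V r}} :=
  [set F : {set tup V r} | [&& F != set0, F \subset Bvert r E,
     [forall j, forall k, (j != k) ==> [disjoint proj j F & proj k F]] &
     all_choices_edges E (fun j => proj j F)]].

Definition order_complex (T : finType) (le : rel T) (S : {set T}) : {set {set T}} :=
  [set c : {set T} | [&& c != set0, c \subset S &
     [forall x in c, forall y in c, le x y || le y x]]].

Definition subset_rel (T : finType) : rel {set T} := fun A B => A \subset B.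

(* isomorphism of (abstract) simplicial complexes given by their sets of
   nonempty simplices: a map injective on the vertex set of K1 that maps
   the simplices of K1 exactly onto the simplices of K2 *)
Definition sc_iso (T1 T2 : finType) (K1 : {set {set T1}}) (K2 : {set {set T2}}) : Prop :=
  exists f : T1 -> T2, {in cover K1 &, injective f} /\ [set f @: (s : {set T1}) | s in K1] = K2.

Definition contains_K11_22 (V : finType) (r : nat) (E : {set {set V}}) : Prop :=
  exists A : 'I_r -> {set V},
    (forall j k, j != k -> [disjoint A j & A k]) /\
    (forall j : 'I_r, #|A j| = (if (j < r - 2)%N then 1 else 2)%N) /\
    all_choices_edges E A.

(* Main.v *)
Require Import Defs.
From mathcomp Require Import all_boot all_fingroup zify.
Set Implicit Arguments. Unset Strict Implicit. Unset Printing Implicit Defensive.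

Lemma cover_oc (T : finType) (S : {set {set T}}) :
  cover (order_complex (@subset_rel T) S) = S.
Proof.
apply/setP=> x; apply/bigcupP/idP.
- case=> c; rewrite inE => /and3P[_ cS _] xc; exact: (subsetP cS).
- move=> xS; exists [set x]; last by rewrite set11.
  rewrite inE; apply/and3P; split.
  + by apply/set0Pn; exists x; rewrite set11.
  + by rewrite sub1set.
  + apply/forallP=> y; apply/implyP; rewrite in_set1 => /eqP->.
    apply/forallP=> z; apply/implyP; rewrite in_set1 => /eqP->.
    by rewrite /subset_rel subxx.
Qed.

Lemma iso_card (T1 T2 : finType) (S1 : {set {set T1}}) (S2 : {set {set T2}}) :
  sc_iso (order_complex (@subset_rel T1) S1) (order_complex (@subset_rel T2) S2) ->
  #|S2| <= #|S1|.
Proof.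
case=> f [_ Hf].
have key : forall K : {set {set {set T1}}}, cover [set f @: (s : {set {set T1}}) | s in K] = f @: cover K.
  move=> K; apply/setP=> y; apply/bigcupP/imsetP.
  - case=> c /imsetP[s sK ->] /imsetP[x xs ->]; exists x => //; apply/bigcupP; by exists s.
  - case=> x /bigcupP[s sK xs] ->. exists (f @: s); first by apply/imsetP; exists s.
    exact: imset_f.
have ->: S2 = f @: S1 by rewrite -{1}(cover_oc S2) -Hf key cover_oc.
exact: leq_imset_card.
Qed.

Lemma choice_fun (V : finType) (r : nat) (A : 'I_r -> {set V}) :
  (forall i, A i != set0) -> exists c : tup V r, forall i, c i \in A i.
Proof.
move=> H; have /fin_all_exists [c Hc] : forall i, exists v, v \in A i.
  by move=> i; apply/set0Pn.
by exists (finfun c) => i; rewrite ffunE.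
Qed.

Lemma iprod_proj (V : finType) (r : nat) (f : {ffun 'I_r -> {set V}}) :
  [forall j, f j != set0] -> forall j, proj j (iprod f) = f j.
Proof.
move=> /forallP Hne j; have [c Hc] := choice_fun (A := fun i => f i) Hne.
apply/setP=> v; apply/imsetP/idP.
- case=> t; rewrite inE => /forallP Ht ->; exact: Ht.
- move=> vf; exists [ffun i => if i == j then v else c i]; last by rewrite ffunE eqxx.
  rewrite inE; apply/forallP=> i; rewrite ffunE; case: eqP => [->|_] //.
Qed.

Lemma iP_sub (V : finType) (r : nat) (E : {set {set V}}) : iP r E \subset Bfaces r E.
Proof.
apply/subsetP=> F /imsetP[f]; rewrite inE => /andP[Hne /forallP HP] ->.
have Hpr := iprod_proj Hne.
have [c Hc] := choice_fun (A := fun i => f i) (forallP Hne).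
rewrite inE; apply/and4P; split.
- apply/set0Pn; exists c; rewrite inE; apply/forallP=> i; exact: Hc.
- apply/subsetP=> t; rewrite !inE => Ht; by have /implyP/(_ Ht)/andP[_ ->] := HP t.
- apply/forallP=> j; apply/forallP=> k; apply/implyP=> jk; rewrite !Hpr.
  rewrite disjoint_subset; apply/subsetP=> v vj; rewrite !inE; apply/negP=> vk.
  pose t := [ffun i => if (i == j) || (i == k) then v else c i].
  have Ht : [forall i, t i \in f i].
    apply/forallP=> i; rewrite ffunE; case: (i =P j) => [->|_] //=.
    by case: (i =P k) => [->|_].
  have /implyP/(_ Ht)/andP[/injectiveP inj _] := HP t.
  have := inj j k; rewrite /t !ffunE !eqxx orbT /= => /(_ erefl) /eqP.
  by rewrite (negbTE jk).
- apply/forallP=> x; apply/implyP=> /forallP Hx.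
  have Hx' : [forall j, x j \in f j] by apply/forallP=> j; rewrite -Hpr; exact: Hx.
  by have /implyP/(_ Hx')/andP[_ ->] := HP x.
Qed.

Lemma K_face (V : finType) (r : nat) (E : {set {set V}}) :
  (2 <= r)%N -> contains_K11_22 r E ->
  exists F, F \in Bfaces r E /\ F \notin iP r E.
Proof.
move=> r2 [A [HA [Hc Hall]]].
have lt2 : (r - 2 < r)%N by lia.
have lt1 : (r - 1 < r)%N by lia.
pose i2 : 'I_r := Ordinal lt2.
pose i1 : 'I_r := Ordinal lt1.
have i12 : i1 != i2 by apply/eqP=> /(congr1 val) /=; lia.
have c2 : #|A i2| = 2 by have := Hc i2; rewrite /= ltnn.
have c1 : #|A i1| = 2.
  have := Hc i1; have -> : (val i1 < r - 2)%N = false by rewrite /=; lia. by [].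
have /cards2P [p1 [p2 [p12 Ap]]] : #|A i2| == 2 by rewrite c2.
have /cards2P [q1 [q2 [q12 Aq]]] : #|A i1| == 2 by rewrite c1.
have Hne : forall i, A i != set0.
  by move=> i; rewrite -card_gt0 Hc; case: ifP.
have [c Hc0] := choice_fun Hne.
pose mk (p q : V) : tup V r := [ffun i => if i == i2 then p else if i == i1 then q else c i].
have mkA : forall p q i, p \in A i2 -> q \in A i1 -> mk p q i \in A i.
  move=> p q i hp hq; rewrite /mk ffunE; case: (i =P i2) => [->|_] //.
  by case: (i =P i1) => [->|_].
have p1A : p1 \in A i2 by rewrite Ap set21.
have p2A : p2 \in A i2 by rewrite Ap set22.
have q1A : q1 \in A i1 by rewrite Aq set21.
have q2A : q2 \in A i1 by rewrite Aq set22.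
have choice : forall x : tup V r, (forall i, x i \in A i) -> is_edge E x.
  move=> x Hx; move/forallP: Hall => /(_ x) /implyP; apply; exact/forallP.
pose s1 := mk p1 q1. pose s2 := mk p2 q2. pose t := mk p1 q2.
pose F := [set s1; s2].
have projsub : forall i, proj i F \subset A i.
  move=> i; apply/subsetP=> v /imsetP[s /set2P[->|->] ->]; exact: mkA.
exists F; split.
- rewrite inE; apply/and4P; split.
  + by apply/set0Pn; exists s1; rewrite set21.
  + apply/subsetP=> s /set2P[->|->]; rewrite inE; apply: choice => i; exact: mkA.
  + apply/forallP=> j; apply/forallP=> k; apply/implyP=> jk.
    exact: disjointW (projsub j) (projsub k) (HA j k jk).
  + apply/forallP=> x; apply/implyP=> /forallP Hx; apply: choice => i.
    exact: (subsetP (projsub i)).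
- apply/negP=> /imsetP[f _ Ff].
  have : s1 \in iprod f by rewrite -Ff set21.
  have : s2 \in iprod f by rewrite -Ff set22.
  rewrite !inE => /forallP H2 /forallP H1.
  have : t \in F.
    rewrite Ff inE; apply/forallP=> i.
    case: (i =P i1) => [->|ne].
    + have := H2 i1; rewrite /t /s2 /mk !ffunE (negbTE i12) eqxx; by [].
    + have := H1 i; rewrite /t /s1 /mk !ffunE; case: (i =P i2) => // _.
      by move/eqP: ne => /negbTE ->.
  case/set2P=> [/(congr1 (fun x : tup V r => x i1))|/(congr1 (fun x : tup V r => x i2))];
    rewrite /t /s1 /s2 /mk !ffunE ?(negbTE i12) eqxx.
  + by move/eqP; rewrite eq_sym (negbTE q12).
  + by move/eqP; rewrite (negbTE p12).
Qed.

Lemma face_K (V : finType) (r : nat) (E : {set {set V}}) (F : {set tup V r}) j k :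
  (2 <= r)%N -> F \in Bfaces r E -> j != k ->
  (1 < #|proj j F|)%N -> (1 < #|proj k F|)%N -> contains_K11_22 r E.
Proof.
move=> r2 FB jk /card_gt1P[a1 [a2 [a1P a2P a12]]] /card_gt1P[b1 [b2 [b1P b2P b12]]].
move: FB; rewrite inE => /and4P[/set0Pn[t0 t0F] _ /forallP Fdis /forallP Fall].
have lt2 : (r - 2 < r)%N by lia.
have lt1 : (r - 1 < r)%N by lia.
pose i2 : 'I_r := Ordinal lt2.
pose i1 : 'I_r := Ordinal lt1.
have i12 : i1 != i2 by apply/eqP=> /(congr1 val) /=; lia.
pose B (m : 'I_r) : {set V} :=
  if m == j then [set a1; a2] else if m == k then [set b1; b2] else [set t0 m].
have Bsub : forall m, B m \subset proj m F.
  move=> m; rewrite /B; case: (m =P j) => [->|_].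
    by apply/subsetP=> v /set2P[->|->].
  case: (m =P k) => [->|_]; first by apply/subsetP=> v /set2P[->|->].
  by rewrite sub1set; apply: imset_f.
pose k' := tperm i2 j k.
have k'2 : k' != i2.
  apply/eqP=> h; move/eqP: jk; apply.
  by rewrite -(tpermK i2 j k) -/k' h tpermL.
pose p : {perm 'I_r} := (tperm i1 k' * tperm i2 j)%g.
have p2 : p i2 = j by rewrite permM (tpermD i12 k'2) tpermL.
have p1 : p i1 = k by rewrite permM tpermL /k' tpermK.
exists (fun i => B (p i)); split; [|split].
- move=> i i' ii'.
  have pne : p i != p i' by apply: contra ii' => /eqP /perm_inj ->.
  exact: disjointW (Bsub _) (Bsub _) (implyP (forallP (Fdis (p i)) (p i')) pne).
- move=> i; rewrite /B.
  case: (i =P i2) => [->|ne2].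
    by rewrite p2 eqxx /= ltnn cards2 a12.
  case: (i =P i1) => [->|ne1].
    rewrite p1 eq_sym (negbTE jk) eqxx cards2 b12.
    by have -> : (val i1 < r - 2)%N = false by rewrite /=; lia.
  have pj : p i != j by rewrite -p2; apply/eqP=> /perm_inj /ne2.
  have pk : p i != k by rewrite -p1; apply/eqP=> /perm_inj /ne1.
  rewrite (negbTE pj) (negbTE pk) cards1.
  have : nat_of_ord i != r - 2 by apply/eqP=> h; apply: ne2; apply: val_inj.
  have : nat_of_ord i != r - 1 by apply/eqP=> h; apply: ne1; apply: val_inj.
  have := ltn_ord i.
  by case: ifP => // /negbT; lia.
- apply/forallP=> x; apply/implyP=> /forallP Hx.
  pose y : tup V r := [ffun m => x (p^-1 m)%g].
  have Hy : is_edge E y.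
    have /implyP := Fall y; apply; apply/forallP=> m.
    apply: (subsetP (Bsub m)); rewrite ffunE.
    by have := Hx (p^-1 m)%g; rewrite permKV.
  move: Hy; rewrite /is_edge; suff -> : [set x i | i in 'I_r] = [set y m | m in 'I_r] by [].
  apply/setP=> v; apply/imsetP/imsetP.
  + case=> i _ ->; exists (p i) => //; by rewrite ffunE permK.
  + case=> m _ ->; exists (p^-1 m)%g => //; by rewrite ffunE.
Qed.

Lemma B_sub (V : finType) (r : nat) (E : {set {set V}}) :
  (2 <= r)%N -> ~ contains_K11_22 r E -> Bfaces r E \subset iP r E.
Proof.
move=> r2 noK; apply/subsetP=> F FB.
have FB' := FB.
move: FB'; rewrite inE => /and4P[/set0Pn[t0 t0F] _ /forallP Fdis /forallP Fall].
pose f : {ffun 'I_r -> {set V}} := [ffun j => proj j F].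
have fP : in_P E f.
  apply/andP; split.
  - apply/forallP=> j; rewrite ffunE; apply/set0Pn; exists (t0 j); exact: imset_f.
  - apply/forallP=> x; apply/implyP=> /forallP Hx.
    have Hx' : forall j, x j \in proj j F by move=> j; have := Hx j; rewrite ffunE.
    apply/andP; split.
    + apply/injectiveP=> i i' e; case: (i =P i') => // ne.
      have := implyP (forallP (Fdis i) i') (introN eqP ne).
      rewrite disjoint_subset => /subsetP /(_ _ (Hx' i)).
      by rewrite inE e Hx'.
    + by have /implyP := Fall x; apply; apply/forallP.
apply/imsetP; exists f; first by [].
apply/eqP; rewrite eqEsubset; apply/andP; split; apply/subsetP=> t.
- by move=> tF; rewrite inE; apply/forallP=> j; rewrite ffunE; apply: imset_f.
- rewrite inE => /forallP Ht.
  have Ht' : forall j, t j \in proj j F by move=> j; have := Ht j; rewrite ffunE.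
  have [j0 Hj0] : exists j0, forall i, i != j0 -> (#|proj i F| <= 1)%N.
    case: (pickP (fun j => 1 < #|proj j F|)%N) => [j bigj|none].
      exists j => i ij; rewrite leqNgt; apply/negP => bigi; apply: noK.
      exact: (face_K r2 FB ij bigi bigj).
    have r0 : (0 < r)%N by lia.
    by exists (Ordinal r0) => i _; rewrite leqNgt none.
  have /imsetP[s sF ts] := Ht' j0.
  suff -> : t = s by [].
  apply/ffunP=> i; case: (i =P j0) => [->//|/eqP ne].
  have := Hj0 i ne => /card_le1_eqP H.
  apply: H; [exact: imset_f | exact: Ht'].
Qed.

Theorem mainTheorem3 (V : finType) (r : nat) (E : {set {set V}}) :
  (2 <= r)%N -> is_rgraph r E ->
  (sc_iso (order_complex (@subset_rel (tup V r)) (iP r E))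
          (order_complex (@subset_rel (tup V r)) (Bfaces r E))
   <-> ~ contains_K11_22 r E).
Proof.
move=> r2 _; split.
- move=> /iso_card Hc HK.
  have [F [FB FnP]] := K_face r2 HK.
  have : iP r E \proper Bfaces r E.
    rewrite properEneq iP_sub andbT; apply/eqP=> e; move/negP: FnP; apply.
    by rewrite e.
  by move/proper_card; rewrite ltnNge Hc.
- move=> noK.
  have -> : iP r E = Bfaces r E.
    by apply/eqP; rewrite eqEsubset iP_sub B_sub.
  exists id; split; first by [].
  rewrite -[RHS]imset_id; apply: eq_imset => s /=; exact: imset_id.
Qed.
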